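(* For $1\le j\le m$ and $a,b\in(\mathbb{Z}_n)^m$, put $\Gamma^j_{\chi_a}:=\chi_a\cdot\Gamma^j$. Then in $M_q(\mathfrak{g})$: - $\Delta(\Gamma^j_{\chi_a})=\chi_{a+\epsilon_j}\otimes\Gamma^j_{\chi_a}+\Gamma^j_{\chi_a}\otimes\chi_a$; - $\chi_a\cdot\Gamma^j_{\chi_b}=\prod_{i=1}^m\mathfrak{q}^{-c_{ij}a_i\lfloor\frac{b_j+1}{n}\rfloor}\Gamma^j_{\chi_{a+b}}$; - $\Gamma^j_{\chi_b}\cdot\chi_a=\prod_{i=1}^mq^{c_{ji}a_i}\Gamma^j_{\chi_{a+b}}$. Here $a+b$ is taken in $(\mathbb{Z}_n)^m$.
   Context: Notation and setting. $\mathbb{k}$ is an algebraically closed field of characteristic $0$. $(a_{ij})$ is an $m\times m$ Cartan matrix of finite type, and $d_i\in\{1,2,3\}$ are such that $c_{ij}=d_ia_{ij}$ is symmetric. $n\ge2$, $q$ is a primitive $n^2$-th root of unity in $\mathbb{k}$, $\mathfrak{q}=q^n$, and $l_i=\mathrm{ord}(q^{c_{ii}})$. $\lfloor\cdot\rfloor$ is the floor function, and elements of $(\mathbb{Z}_n)^m$ have entries in $\{0,\dots,n-1\}$; $\epsilon_j$ is the $j$-th standard vector. $A_q(\mathfrak{g})$ is the half small quasi-quantum group: the subalgebra generated by $h_i=g_i^n$ and $e_i$ of the Hopf algebra $H$ generated by commuting grouplikes $g_i$ ($g_i^{n^2}=1$) and $e_i$ with $g_ie_jg_i^{-1}=q^{\delta_{ij}}e_j$,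 $e_i^{l_i}=0$, the quantum Serre relations, and $\Delta(e_i)=e_i\otimes\prod_jg_j^{c_{ij}}+1\otimes e_i$, with quasi-Hopf structure inherited from a twist of $H$. Let $1_a$ be the idempotents of $\mathbb{k}\langle h_i\rangle$ with $1_ah_i=\mathfrak{q}^{a_i}1_a$, $1^i_k=\frac1n\sum_j\mathfrak{q}^{-kj}h_i^j$, $b_i=\sum_a\prod_jq^{-c_{ij}a_j}1_a$, and $H_i=\prod_jh_j^{c_{ij}}$. Its structure is: - $\Delta(h_i)=h_i\otimes h_i$; - $\Delta(e_i)=e_i\otimes b_i^{-1}+1\otimes\sum_{j=1}^{n-1}1^i_je_i+H_i^{-1}\otimes1^i_0e_i$; - $\phi=\sum_{a,b,c}\prod_{i,j}\mathfrak{q}^{-c_{ij}a_i\lfloor\frac{b_j+c_j}{n}\rfloor}1_a\otimes1_b\otimes1_c$. $M_q(\mathfrak{g})=A_q(\mathfrak{g})^*$ is the dual Majid algebra: - its coproduct is dual to the product of $A_q(\mathfrak{g})$; - its product is $(f\cdot g)(x)=\sum f(x_{(1)})g(x_{(2)})$; - its reassociator is $\Phi=\phi$ viewed as a functional, so $\Phi(\chi_a,\chi_b,\chi_c)=\prod_{s,t}\mathfrak{q}^{-c_{st}a_s\lfloor\frac{b_t+c_t}{n}\rfloor}$. $\chi_a$ ($a\in(\mathbb{Z}_n)^m$) is the algebra character of $A_q(\mathfrak{g})$ with $\chi_a(h_j)=\mathfrak{q}^{a_j}$ and $\chi_a(e_j)=0$; these are the grouplikes of $M_q(\mathfrak{g})$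 and $\chi_a\chi_b=\chi_{a+b}$; set $\chi_i=\chi_{\epsilon_i}$. Fix a homogeneous basis of $A_q(\mathfrak{g})$ ($\deg h_i=0$, $\deg e_i=1$) containing all $1_a$ and $1_ae_i$, and let $\Gamma^i=(1_{\epsilon_i}e_i)^*$ be the corresponding dual basis element. *)

(* Defs.v *)
(* Model of the half small quasi-quantum group A_q(g) and of
   its dual Majid algebra M_q(g) = A_q(g)^*. *)
From HB Require Import structures.
From mathcomp Require Import all_boot all_order all_algebra.
Set Implicit Arguments.
Unset Strict Implicit.
Unset Printing Implicit Defensive.
Import GRing.Theory.
Local Open Scope ring_scope.

Definition cmat (m : nat) (Ca : 'I_m -> 'I_m -> int) (d : 'I_m -> nat)
  (i j : 'I_m) : int := (d i)%:Z * Ca i j.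

Definition finite_cartan (m : nat) (Ca : 'I_m -> 'I_m -> int) (d : 'I_m -> nat) : Prop :=
  [/\ forall i, Ca i i = 2,
      forall i j, i != j -> Ca i j <= 0,
      forall i, d i \in [:: 1; 2; 3]%N,
      forall i j, cmat Ca d i j = cmat Ca d j i &
      forall v : 'I_m -> int, (exists i, v i != 0) ->
        0 < \sum_(i < m) \sum_(j < m) v i * cmat Ca d i j * v j].

Fixpoint gbin (R : nzRingType) (v : R) (N r : nat) : R :=
  match N, r with
  | _, 0%N => 1
  | 0%N, _.+1 => 0
  | N'.+1, r'.+1 => gbin v N' r' + v ^+ r'.+1 * gbin v N' r'.+1
  end.

Definition qbin (F : unitRingType) (v : F) (N r : nat) : F :=
  v ^- (r * (N - r)) * gbin (v ^+ 2) N r.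

Definition eps (m n : nat) (j : 'I_m) : {ffun 'I_m -> 'Z_n} :=
  [ffun i => (i == j)%:R].

Section Alg.
Variables (k : fieldType) (m n : nat) (Ca : 'I_m -> 'I_m -> int)
  (d : 'I_m -> nat) (q : k) (l : 'I_m -> nat).

(* Defining relations of A_q(g) for elements h_i, e_i of a k-algebra B
   (frak q = q^n):  h_i commute, h_i^n = 1, h_i e_j h_i^{-1} = frak q^{delta_ij} e_j,
   e_i^{l_i} = 0, quantum Serre relations with q_i = q^{d_i}. *)
Definition qqg_rel (B : algType k) (h e : 'I_m -> B) : Prop :=
  [/\ forall i j, h i * h j = h j * h i,
      forall i, h i ^+ n = 1,
      forall i j, h i * e j = ((q ^+ n) ^+ (i == j)) *: (e j * h i),
      forall i, e i ^+ l i = 0 &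
      forall i j, i != j ->
        \sum_(r < (absz (1 - Ca i j)).+1)
          ((-1) ^+ r * qbin (q ^+ d i) (absz (1 - Ca i j)) r) *:
            (e i ^+ (absz (1 - Ca i j) - r) * e j * e i ^+ r) = 0].

Inductive gen (A : algType k) (h e : 'I_m -> A) : A -> Prop :=
  | gen1 : gen h e 1
  | genH i : gen h e (h i)
  | genE i : gen h e (e i)
  | genD x y : gen h e x -> gen h e y -> gen h e (x + y)
  | genM x y : gen h e x -> gen h e y -> gen h e (x * y)
  | genZ (c : k) x : gen h e x -> gen h e (c *: x).

Definition qqg_univ (A : algType k) (h e : 'I_m -> A) : Prop :=
  forall (B : algType k) (h' e' : 'I_m -> B), qqg_rel h' e' ->
    exists f : A -> B,
      [/\ forall (c : k) x y, f (c *: x + y) = c *: f x + f y,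
          f 1 = 1,
          forall x y, f (x * y) = f x * f y,
          forall i, f (h i) = h' i &
          forall i, f (e i) = e' i].

Definition is_Aq (A : algType k) (h e : 'I_m -> A) : Prop :=
  [/\ qqg_rel h e, forall x, gen h e x & qqg_univ h e].

Variables (A : algType k) (h e : 'I_m -> A).

Inductive mono : nat -> A -> Prop :=
  | mono1 : mono 0 1
  | monoH i dg x : mono dg x -> mono dg (h i * x)
  | monoE i dg x : mono dg x -> mono dg.+1 (e i * x).

Inductive homog (dg : nat) : A -> Prop :=
  | homog0 : homog dg 0
  | homogM x : mono dg x -> homog dg x
  | homogD (c : k) x y : homog dg x -> homog dg y -> homog dg (c *: x + y).

Definition onei (i : 'I_m) (c : nat) : A :=
  (n%:R : k)^-1 *: \sum_(j < n) ((q ^+ n) ^- (c * j)) *: h i ^+ j.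

Definition idem (a : {ffun 'I_m -> 'Z_n}) : A := \prod_(i < m) onei i (a i).

Definition binv (i : 'I_m) : A :=
  \sum_(a : {ffun 'I_m -> 'Z_n})
     (\prod_(j < m) q ^ (cmat Ca d i j * (a j : nat)%:Z)) *: idem a.

(* H_i^{-1} = prod_j h_j^{-c_ij}  (h_j^n = 1) *)
Definition Hinv (i : 'I_m) : A :=
  \prod_(j < m) h j ^+ (absz ((- cmat Ca d i j) %% n)%Z).

(* ---------- tensors A (x) A as finite formal sums ---------- *)
Definition lfun (f : A -> k) : Prop :=
  forall (c : k) x y, f (c *: x + y) = c * f x + f y.

Definition pair_eval (f g : A -> k) (T : seq (A * A)) : k :=
  \sum_(p <- T) f p.1 * g p.2.

(* equality in A (x) A *)
Definition teq (T T' : seq (A * A)) : Prop :=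
  forall f g, lfun f -> lfun g -> pair_eval f g T = pair_eval f g T'.

Definition tmul (T T' : seq (A * A)) : seq (A * A) :=
  [seq (p.1 * p'.1, p.2 * p'.2) | p <- T, p' <- T'].

Definition tscale (c : k) (T : seq (A * A)) : seq (A * A) :=
  [seq (c *: p.1, p.2) | p <- T].

Definition is_coprod (Delta : A -> seq (A * A)) : Prop :=
  [/\ forall (c : k) x y, teq (Delta (c *: x + y)) (tscale c (Delta x) ++ Delta y),
      teq (Delta 1) [:: (1, 1)],
      forall x y, teq (Delta (x * y)) (tmul (Delta x) (Delta y)),
      forall i, teq (Delta (h i)) [:: (h i, h i)] &
      forall i, teq (Delta (e i))
        ([:: (e i, binv i)] ++
         [seq (1, onei i j * e i) | j <- iota 1 n.-1] ++
         [:: (Hinv i, onei i 0 * e i)])].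

(* product of M_q(g) = A_q(g)^*:  (f.g)(x) = sum f(x_(1)) g(x_(2)) *)
Definition mmul (Delta : A -> seq (A * A)) (f g : A -> k) : A -> k :=
  fun x => pair_eval f g (Delta x).

Definition is_chi (chi : {ffun 'I_m -> 'Z_n} -> A -> k) : Prop :=
  forall a, [/\ lfun (chi a), chi a 1 = 1,
                forall x y, chi a (x * y) = chi a x * chi a y,
                forall j, chi a (h j) = (q ^+ n) ^+ (a j : nat) &
                forall j, chi a (e j) = 0].

(* Gamma^j = (1_{eps_j} e_j)^* for a homogeneous basis containing all
   1_a and 1_a e_i *)
Definition is_Gamma (Gam : 'I_m -> A -> k) : Prop :=
  forall j, [/\ lfun (Gam j),
                forall a i, Gam j (idem a * e i) = ((a == eps n j) && (i == j))%:R &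
                forall dg x, homog dg x -> dg != 1%N -> Gam j x = 0].

End Alg.

(* Main.v *)
Require Import Defs.
From HB Require Import structures.
From mathcomp Require Import all_boot all_order all_algebra.
From mathcomp Require Import ring zify.
Import GRing.Theory.
Local Open Scope ring_scope.
Set Implicit Arguments.
Unset Strict Implicit.

Section Gen.
Variables (k : fieldType) (A : algType k).

Lemma lfun0 (f : A -> k) : lfun f -> f 0 = 0.
Proof.
move=> lf; have := lf 1 0 0; rewrite scale1r addr0 mul1r => E.
by apply: (addrI (f 0)); rewrite addr0 -E.
Qed.

Lemma lfunZ (f : A -> k) c x : lfun f -> f (c *: x) = c * f x.
Proof. by move=> lf; have := lf c x 0; rewrite addr0 lfun0 // addr0. Qed.

Lemma lfunD (f : A -> k) x y : lfun f -> f (x + y) = f x + f y.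
Proof. by move=> lf; have := lf 1 x y; rewrite scale1r mul1r. Qed.

Lemma lfun_sum (f : A -> k) (I : Type) (r : seq I) (F : I -> A) :
  lfun f -> f (\sum_(i <- r) F i) = \sum_(i <- r) f (F i).
Proof.
move=> lf; elim: r => [|i r IH]; first by rewrite !big_nil lfun0.
by rewrite !big_cons lfunD // IH.
Qed.

Lemma pe_cat (f g : A -> k) T T' :
  pair_eval f g (T ++ T') = pair_eval f g T + pair_eval f g T'.
Proof. by rewrite /pair_eval big_cat. Qed.

Lemma pe_tscale (f g : A -> k) c T : lfun f ->
  pair_eval f g (tscale c T) = c * pair_eval f g T.
Proof.
move=> lf; rewrite /pair_eval /tscale big_map mulr_sumr.
by apply: eq_bigr => p _; rewrite lfunZ // mulrA.
Qed.

Lemma pe_tmul (f g : A -> k) T T' :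
  pair_eval f g (tmul T T') =
  \sum_(p <- T) \sum_(p' <- T') f (p.1 * p'.1) * g (p.2 * p'.2).
Proof. by rewrite /pair_eval /tmul big_allpairs_dep. Qed.

Definition isChar (f : A -> k) :=
  [/\ lfun f, f 1 = 1 & forall x y, f (x * y) = f x * f y].
Definition isDer (c1 c2 g : A -> k) :=
  lfun g /\ forall x y, g (x * y) = c1 x * g y + g x * c2 y.

Lemma isDer_ext c1 c2 c1' c2' g : isDer c1 c2 g ->
  (forall x, c1 x = c1' x) -> (forall x, c2 x = c2' x) -> isDer c1' c2' g.
Proof. by move=> [lg dg] E1 E2; split => // x y; rewrite dg E1 E2. Qed.

Lemma isDer_scale c1 c2 g (s : k) : isDer c1 c2 g ->
  isDer c1 c2 (fun x => s * g x).
Proof.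
move=> [lg dg]; split.
  by move=> c x y; rewrite lg; ring.
by move=> x y; rewrite dg; ring.
Qed.

Variables (m n : nat) (Ca : 'I_m -> 'I_m -> int) (d : 'I_m -> nat) (q : k)
  (h e : 'I_m -> A) (Delta : A -> seq (A * A)).
Hypothesis cop : is_coprod n Ca d q h e Delta.

Lemma mmul_lfun f g : lfun f -> lfun g -> lfun (mmul Delta f g).
Proof.
move=> lf lg c x y; case: cop => [cD _ _ _ _].
by rewrite /mmul (cD c x y f g lf lg) pe_cat pe_tscale.
Qed.

Lemma mmul_mul f g x y : lfun f -> lfun g ->
  mmul Delta f g (x * y) =
  \sum_(p <- Delta x) \sum_(p' <- Delta y) f (p.1 * p'.1) * g (p.2 * p'.2).
Proof.
move=> lf lg; case: cop => [_ _ cM _ _].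
by rewrite /mmul (cM x y f g lf lg) pe_tmul.
Qed.

Lemma mmul_1 f g : lfun f -> lfun g -> mmul Delta f g 1 = f 1 * g 1.
Proof.
move=> lf lg; case: cop => [_ c1 _ _ _].
by rewrite /mmul (c1 f g lf lg) /pair_eval big_seq1.
Qed.

Lemma mmul_h f g i : lfun f -> lfun g -> mmul Delta f g (h i) = f (h i) * g (h i).
Proof.
move=> lf lg; case: cop => [_ _ _ ch _].
by rewrite /mmul (ch i f g lf lg) /pair_eval big_seq1.
Qed.

Lemma mmul_e f g i : lfun f -> lfun g -> mmul Delta f g (e i) =
  f (e i) * g (binv n Ca d q h i)
  + \sum_(c <- iota 1 n.-1) f 1 * g (onei n q h i c * e i)
  + f (Hinv n Ca d h i) * g (onei n q h i 0 * e i).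
Proof.
move=> lf lg; case: cop => [_ _ _ _ ce].
rewrite /mmul (ce i f g lf lg) !pe_cat /pair_eval !big_seq1 big_map addrA //.
Qed.

Lemma mmul_charchar f g : isChar f -> isChar g -> isChar (mmul Delta f g).
Proof.
move=> [lf f1 fM] [lg g1 gM]; split; first exact: mmul_lfun.
  by rewrite mmul_1 // f1 g1 mulr1.
move=> x y; rewrite mmul_mul // /mmul /pair_eval big_distrl /=.
apply: eq_bigr => p _; rewrite big_distrr /=; apply: eq_bigr => p' _.
rewrite fM gM; ring.
Qed.

Lemma mmul_charder f c1 c2 g : isChar f -> isDer c1 c2 g ->
  isDer (mmul Delta f c1) (mmul Delta f c2) (mmul Delta f g).
Proof.
move=> [lf f1 fM] [lg gD]; split; first exact: mmul_lfun.
move=> x y; rewrite mmul_mul // /mmul /pair_eval !big_distrl -big_split /=.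
apply: eq_bigr => p _; rewrite !big_distrr -big_split /=; apply: eq_bigr => p' _.
rewrite fM gD; ring.
Qed.

Lemma mmul_derchar f c1 c2 g : isDer c1 c2 f -> isChar g ->
  isDer (mmul Delta c1 g) (mmul Delta c2 g) (mmul Delta f g).
Proof.
move=> [lf fD] [lg g1 gM]; split; first exact: mmul_lfun.
move=> x y; rewrite mmul_mul // /mmul /pair_eval !big_distrl -big_split /=.
apply: eq_bigr => p _; rewrite !big_distrr -big_split /=; apply: eq_bigr => p' _.
rewrite fD gM; ring.
Qed.

Hypothesis genall : forall x, gen h e x.

Lemma der_uniq c1 c2 g1 g2 : isDer c1 c2 g1 -> isDer c1 c2 g2 ->
  g1 1 = g2 1 -> (forall i, g1 (h i) = g2 (h i)) -> (forall i, g1 (e i) = g2 (e i)) ->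
  forall x, g1 x = g2 x.
Proof.
move=> [l1 D1] [l2 D2] E1 Eh Ee x; elim: (genall x) => //.
- by move=> x' y' _ I1 _ I2; rewrite !lfunD // I1 I2.
- by move=> x' y' _ I1 _ I2; rewrite D1 D2 I1 I2.
- by move=> c x' _ I; rewrite !lfunZ // I.
Qed.

Lemma char_uniq g1 g2 : isChar g1 -> isChar g2 ->
  (forall i, g1 (h i) = g2 (h i)) -> (forall i, g1 (e i) = g2 (e i)) ->
  forall x, g1 x = g2 x.
Proof.
move=> [l1 o1 M1] [l2 o2 M2] Eh Ee x; elim: (genall x) => //.
- by rewrite o1 o2.
- by move=> x' y' _ I1 _ I2; rewrite !lfunD // I1 I2.
- by move=> x' y' _ I1 _ I2; rewrite M1 M2 I1 I2.
- by move=> c x' _ I; rewrite !lfunZ // I.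
Qed.

End Gen.

Section Main.
Variables (k : fieldType) (A : algType k).
Variables (m n : nat) (Ca : 'I_m -> 'I_m -> int) (d : 'I_m -> nat) (q : k)
  (l : 'I_m -> nat) (h e : 'I_m -> A).
Hypothesis n_gt1 : (1 < n)%N.
Hypothesis chark : [pchar k] =i pred0.
Hypothesis zprim : n.-primitive_root (q ^+ n).
Hypothesis rel : qqg_rel n Ca d q l h e.
Variables (chi : {ffun 'I_m -> 'Z_n} -> A -> k) (Gam : 'I_m -> A -> k)
  (Delta : A -> seq (A * A)).
Hypothesis chiH : is_chi q h e chi.
Hypothesis GamH : is_Gamma n q h e Gam.
Hypothesis cop : is_coprod n Ca d q h e Delta.
Hypothesis genall : forall x, gen h e x.
Local Notation z := (q ^+ n).

Lemma n_gt0 : (0 < n)%N. Proof. exact: ltnW. Qed.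
Lemma zn1 : z ^+ n = 1. Proof. exact: prim_expr_order. Qed.
Lemma z_neq0 : z != 0.
Proof.
apply/eqP => z0; have := zn1; rewrite z0 expr0n eqn0Ngt n_gt0 /= => /eqP.
by rewrite eq_sym oner_eq0.
Qed.
Lemma nR_neq0 : (n%:R : k) != 0.
Proof. by move/pcharf0P: chark => ->; rewrite -lt0n n_gt0. Qed.

Lemma sum_shift (F : nat -> A) N : F N = F 0%N ->
  \sum_(t < N) F t.+1 = \sum_(t < N) F t.
Proof.
case: N => [|N] E; first by rewrite !big_ord0.
by rewrite big_ord_recr big_ord_recl /= E addrC.
Qed.

Lemma onei_h i c : h i * onei n q h i c = z ^+ c *: onei n q h i c.
Proof.
rewrite /onei -scalerAr [RHS]scalerA mulrC -scalerA; congr (_ *: _).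
rewrite mulr_sumr.
pose F t := (z ^+ (c * t))^-1 *: h i ^+ t.
transitivity (\sum_(t < n) z ^+ c *: F t.+1).
  apply: eq_bigr => t _; rewrite /F -scalerAr -exprS scalerA; congr (_ *: _).
  rewrite mulnS exprD invfM mulrA divff ?mul1r //; exact: expf_neq0 z_neq0.
rewrite -scaler_sumr (sum_shift (F:=F)) //; rewrite /F.
case: rel => _ hn _ _ _; rewrite hn muln0 expr0 mulnC exprM zn1 expr1n invr1.
by [].
Qed.

Lemma sumZn (R : nmodType) (F : nat -> R) :
  \sum_(c : 'Z_n) F c = \sum_(c < n) F c.
Proof. by rewrite -[LHS](big_mkord xpredT F) (Zp_cast n_gt1) big_mkord. Qed.

Lemma geo_sum t : (0 < t < n)%N -> \sum_(c < n) (z ^+ (c * t))^-1 = 0.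
Proof.
move=> /andP[t0 tn]; set w := (z ^+ t)^-1.
have E : forall c, (z ^+ (c * t))^-1 = w ^+ c by move=> c; rewrite mulnC exprM exprVn.
under eq_bigr do rewrite E.
have w1 : w != 1.
  rewrite /w invr_eq1; apply/eqP => /eqP; rewrite -(expr0 z) (eq_prim_root_expr zprim).
  by rewrite mod0n modn_small // => /eqP t00; move: t0; rewrite t00.
have := subrX1 w n; rewrite /w exprVn (exprAC z t n) zn1 expr1n invr1 subrr -/w.
by move/esym/eqP; rewrite mulf_eq0 subr_eq0 (negPf w1) => /eqP.
Qed.

Lemma onei_sum i : \sum_(c < n) onei n q h i c = 1.
Proof.
rewrite /onei -scaler_sumr.
rewrite exchange_big /=.
under eq_bigr do rewrite -scaler_suml.
rewrite (bigD1 (Ordinal n_gt0)) //= [X in _ + X]big1 => [|t tn0]; last first.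
  rewrite geo_sum ?scale0r // ltn_ord andbT lt0n.
  by apply: contra tn0 => /eqP t0; apply/eqP/val_inj.
rewrite addr0 expr0; under eq_bigr do rewrite muln0 expr0 invr1.
by rewrite sumr_const card_ord scalerA mulVf ?nR_neq0 // scale1r.
Qed.

Lemma hcomm i j : h i * h j = h j * h i.
Proof. by case: rel => hc _ _ _ _; exact: hc. Qed.

Lemma h_onei_comm i j c : h i * onei n q h j c = onei n q h j c * h i.
Proof.
rewrite /onei -scalerAr -scalerAl; congr (_ *: _).
rewrite mulr_sumr mulr_suml; apply: eq_bigr => t _.
rewrite -scalerAr -scalerAl; congr (_ *: _).
exact: (commrX t (hcomm i j)).
Qed.

Lemma h_prod i (F : 'I_m -> A) c : h i * F i = c *: F i ->
  (forall j, h i * F j = F j * h i) -> forall r,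
  h i * \prod_(j <- r) F j =
  if i \in r then c *: \prod_(j <- r) F j else \prod_(j <- r) F j * h i.
Proof.
move=> Fi Fc; elim=> [|j r IH]; first by rewrite big_nil in_nil mulr1 mul1r.
rewrite big_cons in_cons mulrA; have [<-|ij] := eqVneq i j; rewrite /=.
  by rewrite Fi scalerAl.
rewrite Fc -mulrA IH; case: (i \in r); first by rewrite scalerAr.
by rewrite mulrA.
Qed.

Lemma h_idem i (a : {ffun 'I_m -> 'Z_n}) :
  h i * idem q h a = z ^+ (a i) *: idem q h a.
Proof.
rewrite /idem (h_prod (c := z ^+ (a i))) ?mem_index_enum //.
  exact: onei_h.
by move=> j; exact: h_onei_comm.
Qed.

Lemma idem_sum : \sum_(a : {ffun 'I_m -> 'Z_n}) idem q h a = 1.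
Proof.
rewrite /idem -(@bigA_distr_bigA _ _ _ _ _ _ _ (fun i (c : 'Z_n) => onei n q h i c)).
rewrite big1 // => i _; rewrite (sumZn (fun c => onei n q h i c)); exact: onei_sum.
Qed.


Local Notation onei := (onei n q h).
Local Notation idem := (idem q h).

Lemma val_lt (x : 'Z_n) : (x < n)%N.
Proof. by have := ltn_ord x; rewrite [X in (_ < X)%N -> _]Zp_cast. Qed.

Lemma val_add (a b : {ffun 'I_m -> 'Z_n}) i :
  (((a + b)%R i : 'Z_n) : nat) = ((a i + b i) %% n)%N.
Proof. by rewrite ffunE /=; congr (_ %% _)%N; exact: Zp_cast. Qed.

Lemma val_eps (i j : 'I_m) : (((eps n j) i : 'Z_n) : nat) = (i == j) :> nat.
Proof.
have H : ((i == j) < n)%N by case: (i == j) => //; exact: ltnW.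
by rewrite ffunE val_Zp_nat // modn_small.
Qed.

Lemma val_zero (i : 'I_m) : nat_of_ord ((0 : {ffun 'I_m -> 'Z_n})%R i) = 0%N.
Proof. by rewrite ffunE. Qed.

Lemma chiC a : isChar (chi a).
Proof. by case: (chiH a). Qed.
Lemma chiL a : lfun (chi a).
Proof. by case: (chiH a). Qed.
Local Hint Resolve chiL : core.
Lemma chi1 a : chi a 1 = 1.
Proof. by case: (chiH a). Qed.
Lemma chiM a x y : chi a (x * y) = chi a x * chi a y.
Proof. by case: (chiH a). Qed.
Lemma chi_h a i : chi a (h i) = z ^+ (a i).
Proof. by case: (chiH a). Qed.
Lemma chi_e a i : chi a (e i) = 0.
Proof. by case: (chiH a). Qed.

Lemma chi_onei_ne (a : {ffun 'I_m -> 'Z_n}) (i : 'I_m) c : (c < n)%N -> (a i : nat) != c -> chi a (onei i c) = 0.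
Proof.
move=> cn ne; have := congr1 (chi a) (onei_h i c).
rewrite chiM chi_h [X in _ = X](lfunZ _ _ (chiL a)) => /eqP; rewrite -subr_eq0 -mulrBl mulf_eq0.
case/orP => [|/eqP //]; rewrite subr_eq0 (eq_prim_root_expr zprim).
by rewrite !modn_small ?val_lt // (negPf ne).
Qed.

Lemma chi_onei (a : {ffun 'I_m -> 'Z_n}) (i : 'I_m) c : (c < n)%N -> chi a (onei i c) = ((a i : nat) == c)%:R.
Proof.
move=> cn; case: (eqVneq (a i : nat) c) => [E|ne]; last by rewrite chi_onei_ne.
have H := congr1 (chi a) (onei_sum i).
rewrite chi1 (lfun_sum _ _ (chiL a)) in H.
have H0 : \sum_(c' < n | c' != Ordinal cn) chi a (onei i c') = 0.
  apply: big1 => c' /eqP ne; apply: chi_onei_ne => //; rewrite E.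
  by apply/eqP => E'; apply: ne; apply: val_inj; rewrite /= E'.
by rewrite (bigD1 (Ordinal cn)) //= H0 addr0 in H; rewrite -H.
Qed.

Lemma chi_prod a (I : Type) (r : seq I) (F : I -> A) :
  chi a (\prod_(i <- r) F i) = \prod_(i <- r) chi a (F i).
Proof. by apply: (big_morph (chi a)); [exact: chiM | exact: chi1]. Qed.

Lemma chi_idem a b : chi a (idem b) = (a == b)%:R.
Proof.
rewrite /idem chi_prod; under eq_bigr do rewrite chi_onei ?val_lt //.
case: (eqVneq a b) => [->|ne]; first by rewrite big1 // => i _; rewrite eqxx.
have [i ni] : exists i, a i != b i.
  apply/existsP; move: ne; apply: contraR; rewrite negb_exists => /forallP H.
  by apply/eqP/ffunP => i; have /negPn/eqP := H i.
by rewrite (bigD1 i) //= (negPf (ni : (a i : nat) != b i)) mul0r.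
Qed.

Local Notation mono := (mono h e).

Lemma mono_mul d1 d2 x y : mono d1 x -> mono d2 y -> mono (d1 + d2) (x * y).
Proof.
move=> mx my; elim: mx => [|i dg x' _ IH|i dg x' _ IH].
- by rewrite mul1r.
- by rewrite -mulrA; constructor.
- by rewrite -mulrA addSn; constructor.
Qed.

Lemma chi_mono_pos a dg w : mono dg w -> (0 < dg)%N -> chi a w = 0.
Proof.
elim=> [//|i dg' x _ IH|i dg' x _ _] pos; rewrite chiM.
  by rewrite IH // mulr0.
by rewrite chi_e mul0r.
Qed.

Lemma chi0_mono0 dg w : mono dg w -> dg = 0%N -> chi 0 w = 1.
Proof.
elim=> [|i dg' x _ IH|//] E; first exact: chi1.
by rewrite chiM IH // chi_h val_zero mul1r.
Qed.

Lemma chi_mono0_neq0 a dg w : mono dg w -> dg = 0%N -> chi a w != 0.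
Proof.
elim=> [|i dg' x _ IH|//] E; first by rewrite chi1 oner_eq0.
by rewrite chiM chi_h mulf_neq0 ?IH // expf_neq0 // z_neq0.
Qed.

Lemma mono1_dec dg w : mono dg w -> dg = 1%N ->
  exists u i v, [/\ mono 0 u, mono 0 v & w = u * (e i * v)].
Proof.
elim=> [//|i dg' x _ IH|i dg' x mx _] E.
  have [u [i' [v [mu mv ->]]]] := IH E.
  by exists (h i * u), i', v; split => //; [constructor | rewrite mulrA].
case: E => E; subst dg'.
by exists 1, i, x; split => //; [constructor | rewrite mul1r].
Qed.

Lemma e_v i dg v : mono dg v -> dg = 0%N -> chi (eps n i) v *: (e i * v) = v * e i.
Proof.
elim=> [|l' dg' x _ IH|//] E.
  by rewrite chi1 scale1r mulr1 mul1r.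
case: rel => _ _ he _ _.
rewrite chiM mulrC -scalerA mulrA chi_h val_eps scalerAl -he -[in LHS]mulrA scalerAr.
by rewrite IH // mulrA.
Qed.

Lemma GamL j : lfun (Gam j).
Proof. by case: (GamH j). Qed.

Local Hint Resolve GamL : core.
Lemma Gam_idem j a i : Gam j (idem a * e i) = ((a == eps n j) && (i == j))%:R.
Proof. by case: (GamH j) => _ H _; exact: H. Qed.

Lemma Gam_mono j dg w : mono dg w -> dg != 1%N -> Gam j w = 0.
Proof. by case: (GamH j) => _ _ H mw; apply: H; apply: homogM. Qed.

Lemma mono0_dec u : mono 0 u -> u = \sum_a chi a u *: idem a.
Proof.
move=> mu.
have E : forall a, u * idem a = chi a u *: idem a.
  move=> a; suff H : forall dg x, mono dg x -> dg = 0%N ->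
    x * idem a = chi a x *: idem a by exact: H mu _.
  move=> dg0 x0; elim=> [|i dg x _ IH|i dg x _ _] E.
    by rewrite mul1r chi1 scale1r.
  by rewrite -mulrA IH // -scalerAr h_idem scalerA chiM chi_h mulrC.
  discriminate.
rewrite -{1}[u]mulr1 -idem_sum mulr_sumr.
by apply: eq_bigr => a _; rewrite E.
Qed.

Lemma Gam_ue j u i : mono 0 u -> Gam j (u * e i) = (i == j)%:R * chi (eps n j) u.
Proof.
move=> mu; rewrite {1}(mono0_dec mu) mulr_suml lfun_sum //.
rewrite (eq_bigr (fun a => chi a u * ((a == eps n j) && (i == j))%:R)); last by move=> a _; rewrite -scalerAl (lfunZ _ _ (GamL j)) Gam_idem.
rewrite (bigD1 (eps n j)) //= eqxx /= big1 ?addr0; first by rewrite mulrC.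
by move=> a /negPf ->; rewrite mulr0.
Qed.

Lemma GamW j u i v : mono 0 u -> mono 0 v ->
  Gam j (u * (e i * v)) = (i == j)%:R * chi (eps n j) u.
Proof.
move=> mu mv.
have cv0 := chi_mono0_neq0 (eps n i) mv (erefl _).
have Ev : e i * v = (chi (eps n i) v)^-1 *: (v * e i).
  by rewrite -(e_v i mv) // scalerA mulVf // scale1r.
rewrite Ev -scalerAr lfunZ // mulrA Gam_ue; last by have := mono_mul mu mv.
rewrite chiM; case: (eqVneq i j) => [E|_]; last by rewrite !mul0r mulr0.
by subst i; rewrite !mul1r; field.
Qed.

Lemma Gam_der_mono j dx dy x y : mono dx x -> mono dy y ->
  Gam j (x * y) = chi (eps n j) x * Gam j y + Gam j x * chi 0 y.
Proof.
move=> mx my.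
case: (eqVneq dx 0%N) => [E0|nx0].
  subst dx; case: (eqVneq dy 1%N) => [E1|ny1].
    have [u [i [v [mu mv ->]]]] := mono1_dec my E1.
    rewrite mulrA !GamW //; last exact: (mono_mul mx mu).
    rewrite (Gam_mono j mx) // mul0r addr0 chiM; ring.
  rewrite (Gam_mono j my ny1) (Gam_mono j mx) // mulr0 mul0r addr0.
  by apply: (Gam_mono j (mono_mul mx my)); rewrite add0n.
case: (eqVneq dx 1%N) => [E1|nx1].
  have [u [i [v [mu mv ->]]]] := mono1_dec mx E1.
  case: (eqVneq dy 0%N) => [E0|ny0].
    subst dy; rewrite -!mulrA !GamW //; last exact: (mono_mul mv my).
    by rewrite (chi0_mono0 my) // mulr1 (chi_mono_pos (eps n j) (mono_mul mu (monoE i mv))) // mul0r add0r.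
  have mxy := mono_mul (mono_mul mu (monoE i mv)) my.
  rewrite (Gam_mono j mxy); last by rewrite add0n addSn add0n.
  rewrite (chi_mono_pos (eps n j) (mono_mul mu (monoE i mv))) //.
  by rewrite (chi_mono_pos 0 my) ?lt0n // mul0r mulr0 addr0.
rewrite (Gam_mono j mx) // mul0r addr0 (chi_mono_pos (eps n j) mx) ?lt0n // mul0r.
rewrite (Gam_mono j (mono_mul mx my)) //.
by move: nx0 nx1; clear; lia.
Qed.


Inductive spanM : A -> Prop :=
  | sp0 : spanM 0
  | spM dg w : mono dg w -> spanM w
  | spD (c : k) x y : spanM x -> spanM y -> spanM (c *: x + y).

Lemma span_mul x y : spanM x -> spanM y -> spanM (x * y).
Proof.
move=> sx sy; elim: sx => [|dg w mw|c x1 x2 _ I1 _ I2].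
- by rewrite mul0r; constructor.
- elim: sy => [|dg' w' mw'|c y1 y2 _ I1 _ I2].
  + by rewrite mulr0; constructor.
  + exact: (spM (mono_mul mw mw')).
  + by rewrite mulrDr -scalerAr; constructor.
- by rewrite mulrDl -scalerAl; constructor.
Qed.

Lemma span_all x : spanM x.
Proof.
elim: (genall x) => [|i|i|x1 y1 _ I1 _ I2|x1 y1 _ I1 _ I2|c x1 _ I].
- by apply: (spM (dg := 0%N)); constructor.
- by rewrite -[h i]mulr1; apply: (spM (dg := 0%N)); do 2 constructor.
- by rewrite -[e i]mulr1; apply: (spM (dg := 1%N)); do 2 constructor.
- by rewrite -[x1]scale1r; constructor.
- exact: span_mul.
- by rewrite -[c *: x1]addr0; constructor => //; constructor.
Qed.

Lemma span_ind (P : A -> Prop) : P 0 -> (forall dg w, mono dg w -> P w) ->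
  (forall c x y, P x -> P y -> P (c *: x + y)) -> forall x, P x.
Proof.
move=> P0 PM PD x; elim: (span_all x) => [|dg w mw|c x1 y1 _ I1 _ I2].
- exact: P0.
- exact: (PM dg w mw).
- exact: PD.
Qed.

Lemma Gam_der j : isDer (chi (eps n j)) (chi 0) (Gam j).
Proof.
split; first exact: GamL.
apply: span_ind.
- by move=> y; rewrite mul0r (lfun0 (GamL j)) (lfun0 (chiL (eps n j))) !mul0r addr0.
- move=> dx x mx; apply: span_ind.
  + by rewrite mulr0 (lfun0 (GamL j)) (lfun0 (chiL 0)) mulr0 mulr0 addr0.
  + by move=> dy y my; exact: Gam_der_mono mx my.
  + move=> c y1 y2 I1 I2; rewrite mulrDr -scalerAr !(GamL j) (chiL 0).
    by rewrite I1 I2; ring.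
- move=> c x1 x2 I1 I2 y; rewrite mulrDl -scalerAl !(GamL j) (chiL (eps n j)).
  by rewrite I1 I2; ring.
Qed.
Lemma chi_add a b x : mmul Delta (chi a) (chi b) x = chi (a + b) x.
Proof.
apply: (char_uniq genall).
- exact: (mmul_charchar cop (chiC a) (chiC b)).
- exact: chiC.
- move=> i; rewrite (mmul_h cop i (chiL a) (chiL b)) !chi_h -exprD val_add.
  by rewrite prim_expr_mod.
- move=> i; rewrite (mmul_e cop i (chiL a) (chiL b)) chi_e mul0r add0r.
  rewrite big1 ?add0r; last by move=> c _; rewrite chiM chi_e !mulr0.
  by rewrite chiM !chi_e !mulr0.
Qed.

Variable j : 'I_m.
Local Notation G b := (mmul Delta (chi b) (Gam j)).

Lemma GL b : lfun (G b).
Proof. exact: (mmul_lfun cop (chiL b) (GamL j)). Qed.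

Lemma G_der b : isDer (chi (b + eps n j)) (chi b) (G b).
Proof.
apply: (isDer_ext (mmul_charder cop (chiC b) (Gam_der j))).
  by move=> x; rewrite chi_add.
by move=> x; rewrite chi_add addr0.
Qed.

Lemma Gam1 : Gam j 1 = 0.
Proof. by apply: (Gam_mono j (dg := 0%N)) => //; constructor. Qed.

Lemma Gam_h i : Gam j (h i) = 0.
Proof. by rewrite -[h i]mulr1; apply: (Gam_mono j (dg := 0%N)) => //; do 2 constructor. Qed.

Lemma Gam_e i : Gam j (e i) = (i == j)%:R.
Proof.
have := GamW j i (u := 1) (v := 1) (mono1 _ _) (mono1 _ _).
by rewrite mul1r mulr1 chi1 mulr1.
Qed.

Lemma G_1 b : G b 1 = 0.
Proof. by rewrite (mmul_1 cop (chiL b) (GamL j)) Gam1 mulr0. Qed.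

Lemma G_h b i : G b (h i) = 0.
Proof. by rewrite (mmul_h cop i (chiL b) (GamL j)) Gam_h mulr0. Qed.

Lemma sum_ind_uniq (v : nat) (s : seq nat) : uniq s ->
  \sum_(c <- s) ((v == c)%:R : k) = (v \in s)%:R.
Proof.
elim: s => [|x s IH]; first by rewrite big_nil.
rewrite big_cons in_cons /= => /andP[xs us]; rewrite IH //.
case: (eqVneq v x) => [->|_] /=; last by rewrite add0r.
by rewrite (negPf xs) addr0.
Qed.

Lemma sum_iota_ind (F : nat -> k) v :
  (forall c, (0 < c < n)%N -> F c = (v == c)%:R) ->
  \sum_(c <- iota 1 n.-1) F c = ((0 < v < n)%N)%:R.
Proof.
move=> HF; rewrite big_seq (eq_bigr (fun c => (v == c)%:R)); last first.
  move=> c; rewrite mem_iota add1n prednK ?n_gt0 // => Hc; exact: HF.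
rewrite -big_seq sum_ind_uniq ?iota_uniq // mem_iota add1n prednK ?n_gt0 //.
Qed.

Lemma Gam_onei_e i c : (c < n)%N ->
  Gam j (onei i c * e i) = (((i == j) : nat) == c)%:R * (i == j)%:R.
Proof.
move=> cn; have [_ D] := Gam_der j.
by rewrite D chi_e mulr0 addr0 chi_onei // val_eps Gam_e.
Qed.

Lemma G_e b i : G b (e i) = (i == j)%:R.
Proof.
rewrite (mmul_e cop i (chiL b) (GamL j)) chi_e mul0r add0r chi1 Gam_onei_e ?n_gt0 //.
rewrite big_seq (eq_bigr (fun c => (((i==j):nat) == c)%:R * (i==j)%:R)); last first.
  move=> c; rewrite mem_iota add1n prednK ?n_gt0 // => /andP[_ cn].
  by rewrite mul1r Gam_onei_e.
rewrite -big_seq.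
case: (eqVneq i j) => [_|_] /=.
  rewrite mul0r mulr0 addr0 (sum_iota_ind (v := 1%N)) /= ?n_gt1 //.
  by move=> c _; rewrite mulr1.
by rewrite !mulr0 addr0 big1 // => c _; rewrite mulr0.
Qed.

Lemma zpow_mod (t : int) : (q ^+ n) ^ (t %% n)%Z = (q ^+ n) ^ t.
Proof.
have H : (q ^+ n) ^ ((t %/ n)%Z * n%:Z) = 1.
  by rewrite mulrC -exprz_exp -exprnP zn1 exp1rz.
have E := expfzDr ((t %/ n)%Z * n%:Z) (t %% n)%Z (z_neq0). rewrite H mul1r -divz_eq in E. by rewrite -E.
Qed.

Lemma chiX a x N : chi a (x ^+ N) = chi a x ^+ N.
Proof. by elim: N => [|N IH]; rewrite ?expr0 ?chi1 // !exprS chiM IH. Qed.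

Hypothesis csym : forall i i', cmat Ca d i i' = cmat Ca d i' i.

Lemma claim2 a b x : mmul Delta (chi a) (G b) x =
  (\prod_(i < m) (q ^+ n) ^ (- (cmat Ca d i j * (a i : nat)%:Z
                                 * (((b j : nat) + 1) %/ n)%N%:Z)))
  * G (a + b) x.
Proof.
set coef := \prod_(i < m) _.
move: x; apply: (der_uniq genall (c1 := chi (a + b + eps n j)) (c2 := chi (a + b))
  (g1 := mmul Delta (chi a) (G b)) (g2 := fun y => coef * G (a + b) y)).
- apply: (isDer_ext (mmul_charder cop (chiC a) (G_der b))) => x'.
    by rewrite chi_add addrA.
  by rewrite chi_add.
- exact: (isDer_scale coef (G_der (a + b))).
- by rewrite (mmul_1 cop (chiL a) (GL b)) !G_1 !mulr0.
- by move=> i; rewrite (mmul_h cop i (chiL a) (GL b)) !G_h !mulr0.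
move=> i; rewrite (mmul_e cop i (chiL a) (GL b)) chi_e mul0r add0r chi1 G_e.
have [_ D] := G_der b.
have E c : G b (onei i c * e i) = chi (b + eps n j) (onei i c) * (i == j)%:R.
  by rewrite D chi_e mulr0 addr0 G_e.
under eq_bigr => c _ do rewrite E mul1r.
rewrite E.
case: (eqVneq i j) => [Eij|_]; last first.
  by rewrite !mulr0 big1 ?add0r // => c _; rewrite mulr0.
subst i; rewrite /= !mulr1n !mulr1 (sum_iota_ind (v := ((b j + 1) %% n)%N)); last first.
  by move=> c /andP[_ cn]; rewrite chi_onei // val_add val_eps eqxx mulr1.
rewrite chi_onei ?n_gt0 // val_add val_eps eqxx.
have bl := val_lt (b j).
case: (ltnP (b j + 1) n) => bn.
  rewrite /coef modn_small // divn_small // bn !addn1 /= mulr0 addr0 big1 // => l0 _.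
  by rewrite mulr0 oppr0 expr0z.
have E1 : (b j + 1 = n)%N by apply/eqP; rewrite eqn_leq bn andbT addn1.
rewrite /coef E1 modnn divnn n_gt0 /= mulr1 add0r /Hinv chi_prod.
apply: eq_bigr => l0 _; rewrite chiX chi_h -exprM exprnP PoszM gez0_abs ?modz_ge0 //.
rewrite mulrC -exprz_exp zpow_mod exprz_exp csym; congr (_ ^ _).
  by rewrite mulr1 mulNr.
by have := n_gt0; lia.
Qed.

Lemma claim3 a b x : mmul Delta (G b) (chi a) x =
  (\prod_(i < m) q ^ (cmat Ca d j i * (a i : nat)%:Z)) * G (a + b) x.
Proof.
set coef := \prod_(i < m) _.
move: x; apply: (der_uniq genall (c1 := chi (a + b + eps n j)) (c2 := chi (a + b))
  (g1 := mmul Delta (G b) (chi a)) (g2 := fun y => coef * G (a + b) y)).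
- apply: (isDer_ext (mmul_derchar cop (G_der b) (chiC a))) => x'.
    by rewrite chi_add addrC addrA.
  by rewrite chi_add addrC.
- exact: (isDer_scale coef (G_der (a + b))).
- by rewrite (mmul_1 cop (GL b) (chiL a)) !G_1 mul0r mulr0.
- by move=> i; rewrite (mmul_h cop i (GL b) (chiL a)) !G_h mul0r mulr0.
move=> i; rewrite (mmul_e cop i (GL b) (chiL a)) G_1 chiM chi_e !mulr0 addr0.
rewrite big1 ?addr0; last by move=> c _; rewrite mul0r.
rewrite !G_e; case: (eqVneq i j) => [Eij|_]; last by rewrite mul0r mulr0.
subst i; rewrite /= mulr1n mul1r mulr1 /binv (lfun_sum _ _ (chiL a)).
rewrite (bigD1 a) //= [X in _ + X]big1 => [|a' na'].
  by rewrite addr0 (lfunZ _ _ (chiL a)) chi_idem eqxx mulr1.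
by rewrite (lfunZ _ _ (chiL a)) chi_idem eq_sym (negPf na') mulr0.
Qed.

End Main.

Theorem lemma3p2 (k : closedFieldType) (chark : [pchar k] =i pred0)
  (m n : nat) (Ca : 'I_m -> 'I_m -> int) (d : 'I_m -> nat) (q : k)
  (l : 'I_m -> nat)
  (A : algType k) (h e : 'I_m -> A) (Delta : A -> seq (A * A))
  (chi : {ffun 'I_m -> 'Z_n} -> A -> k) (Gam : 'I_m -> A -> k) :
  finite_cartan Ca d ->
  (1 < n)%N ->
  (n ^ 2)%N.-primitive_root q ->
  (forall i, (l i).-primitive_root (q ^ cmat Ca d i i)) ->
  is_Aq n Ca d q l h e ->
  is_coprod n Ca d q h e Delta ->
  is_chi q h e chi ->
  is_Gamma n q h e Gam ->
  forall (j : 'I_m) (a b : {ffun 'I_m -> 'Z_n}),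
    (forall x y,
       mmul Delta (chi a) (Gam j) (x * y) =
         chi (a + eps n j) x * mmul Delta (chi a) (Gam j) y
         + mmul Delta (chi a) (Gam j) x * chi a y)
    /\
    (forall x,
       mmul Delta (chi a) (mmul Delta (chi b) (Gam j)) x =
         (\prod_(i < m) (q ^+ n) ^ (- (cmat Ca d i j * (a i : nat)%:Z
                                        * (((b j : nat) + 1) %/ n)%N%:Z)))
         * mmul Delta (chi (a + b)) (Gam j) x)
    /\
    (forall x,
       mmul Delta (mmul Delta (chi b) (Gam j)) (chi a) x =
         (\prod_(i < m) q ^ (cmat Ca d j i * (a i : nat)%:Z))
         * mmul Delta (chi (a + b)) (Gam j) x).
Proof.
move=> [_ _ _ csym _] n1 qprim _ [rel genall _] cop chiH GamH j a b.
have zprim : n.-primitive_root (q ^+ n).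
  have := dvdn_prim_root qprim (dvdn_exp2l n (isT : (1 <= 2)%N)).
  by rewrite expn1 expnS expn1 mulnK // ltnW.
split; first exact: (G_der n1 chark zprim rel chiH GamH cop genall j a).2.
split.
  exact: (claim2 n1 chark zprim rel chiH GamH cop genall j csym).
exact: (claim3 n1 chark zprim rel chiH GamH cop genall j).
Qed.
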